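(* Let $K$ be a field of characteristic $p>0$ such that $K/K^{p^\infty}$ is a finitely generated field extension, where $K^{p^\infty}=\bigcap_{n\ge0}K^{p^n}$. Let $W_1$ be a subfield with $K^p\subseteq W_1\subsetneq K$. Then there exists a subfield $W_2\subseteq W_1$ such that $K,W_1,W_2$ is a $2$-foliation on $K$, i.e. $K^{p^2}\subseteq W_2$, $W_2\cdot K^p=W_1$, and $\dim_{W_2}(W_1)=\dim_{W_1}(K)$.
   Context: $\cdot$ denotes the compositum of subfields inside $K$. *)

(* Defs.v *)
(* Subfields of an arbitrary (possibly infinite-dimensional) field K
   are represented as predicates K -> Prop closed under the field operations. *)
From mathcomp Require Import all_boot all_order all_algebra.
Set Implicit Arguments. Unset Strict Implicit. Unset Printing Implicit Defensive.
Import GRing.Theory.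
Local Open Scope ring_scope.

Section Subfields.
Variable K : fieldType.

Definition is_subfield (S : K -> Prop) : Prop :=
  [/\ S 0, S 1,
      (forall x y, S x -> S y -> S (x - y)),
      (forall x y, S x -> S y -> S (x * y)) &
      (forall x, S x -> S x^-1)].

Definition subset_of (A B : K -> Prop) : Prop := forall x, A x -> B x.

Definition pow_image (q : nat) : K -> Prop := fun x => exists y : K, x = y ^+ q.

Definition perfect_core (p : nat) : K -> Prop :=
  fun x => forall n : nat, pow_image (p ^ n) x.

Definition gen_field (A : K -> Prop) : K -> Prop :=
  fun x => forall S, is_subfield S -> subset_of A S -> S x.

Definition compositum (A B : K -> Prop) : K -> Prop :=
  gen_field (fun x => A x \/ B x).

Definition fin_gen_over (F : K -> Prop) : Prop :=
  exists s : seq K, forall x : K, gen_field (fun y => F y \/ y \in s) x.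

Definition lin_comb (A : K -> Prop) (s : seq K) (x : K) : Prop :=
  exists c : seq K, [/\ size c = size s, (forall i, A (c`_i)) &
      x = \sum_(i < size s) c`_i * s`_i].

Definition lin_indep (A : K -> Prop) (s : seq K) : Prop :=
  forall c : seq K, size c = size s -> (forall i, A (c`_i)) ->
    \sum_(i < size s) c`_i * s`_i = 0 -> forall i, (i < size s)%N -> c`_i = 0.

Definition is_basis (A B : K -> Prop) (s : seq K) : Prop :=
  [/\ (forall x, x \in s -> B x), lin_indep A s & (forall x, B x -> lin_comb A s x)].

Definition ext_deg (A B : K -> Prop) (n : nat) : Prop :=
  exists s : seq K, size s = n /\ is_basis A B s.

(* dim_A(B) = dim_C(D) as elements of nat ∪ {infinity}:
   for each n, one is n iff the other is n (both infinite otherwise) *)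
Definition same_deg (A B C D : K -> Prop) : Prop :=
  forall n : nat, ext_deg A B n <-> ext_deg C D n.

End Subfields.

(* Main.v *)
From HB Require Import structures.
Require Import Defs.
From mathcomp Require Import all_boot all_order all_algebra.
From mathcomp Require Import ring.
From Stdlib Require Import Classical ClassicalEpsilon.
Set Implicit Arguments. Unset Strict Implicit. Unset Printing Implicit Defensive.
Import GRing.Theory.
Local Open Scope ring_scope.

Section Basics.
Variable K : fieldType.
Implicit Types (S A L M : K -> Prop) (s : seq K).

Lemma sf0 S : is_subfield S -> S 0. Proof. by case. Qed.
Lemma sf1 S : is_subfield S -> S 1. Proof. by case. Qed.
Lemma sfB S x y : is_subfield S -> S x -> S y -> S (x - y). Proof. by case=> _ _ h _ _; apply: h. Qed.
Lemma sfM S x y : is_subfield S -> S x -> S y -> S (x * y). Proof. by case=> _ _ _ h _; apply: h. Qed.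
Lemma sfV S x : is_subfield S -> S x -> S x^-1. Proof. by case=> _ _ _ _ h; apply: h. Qed.
Lemma sfN S x : is_subfield S -> S x -> S (- x).
Proof. by move=> hS hx; rewrite -sub0r; apply: sfB => //; apply: sf0. Qed.
Lemma sfD S x y : is_subfield S -> S x -> S y -> S (x + y).
Proof. by move=> hS hx hy; rewrite -[y]opprK; apply: sfB => //; apply: sfN. Qed.
Lemma sfX S x n : is_subfield S -> S x -> S (x ^+ n).
Proof. move=> hS hx; elim: n => [|n IH]; first by rewrite expr0; apply: sf1.
by rewrite exprS; apply: sfM. Qed.
Lemma sfn S n : is_subfield S -> S n%:R.
Proof. move=> hS; elim: n => [|n IH]; first exact: sf0.
by rewrite -addn1 natrD; apply: sfD => //; apply: sf1. Qed.
Lemma sfMn S x n : is_subfield S -> S x -> S (x *+ n).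
Proof. by move=> hS hx; rewrite -mulr_natr; apply: sfM => //; apply: sfn. Qed.
Lemma sfsum S (I : Type) (r : seq I) (P : pred I) (F : I -> K) :
  is_subfield S -> (forall i, P i -> S (F i)) -> S (\sum_(i <- r | P i) F i).
Proof. by move=> hS hF; apply: (big_ind S) => //; [apply: sf0|move=> *; apply: sfD]. Qed.

Lemma gen_field_sf A : is_subfield (gen_field A).
Proof.
split.
- by move=> S hS _; apply: sf0.
- by move=> S hS _; apply: sf1.
- by move=> x y hx hy S hS hA; apply: sfB => //; [apply: hx|apply: hy].
- by move=> x y hx hy S hS hA; apply: sfM => //; [apply: hx|apply: hy].
- by move=> x hx S hS hA; apply: sfV => //; apply: hx.
Qed.
Lemma gen_field_in A x : A x -> gen_field A x.
Proof. by move=> hx S _ hA; apply: hA. Qed.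
Lemma gen_field_min A S : is_subfield S -> subset_of A S -> subset_of (gen_field A) S.
Proof. by move=> hS hA x hx; apply: hx. Qed.

Inductive spn A : seq K -> K -> Prop :=
| spn_nil : spn A [::] 0
| spn_cons a x s y : A a -> spn A s y -> spn A (x :: s) (a * x + y).

Fixpoint indepR A s : Prop :=
  match s with
  | [::] => True
  | x :: s' => indepR A s' /\ (forall a y, A a -> spn A s' y -> a * x + y = 0 -> a = 0)
  end.

Definition addcl A := A 0 /\ (forall u v, A u -> A v -> A (u + v)).
Definition mulcl A := forall u v, A u -> A v -> A (u * v).
Lemma sf_addcl S : is_subfield S -> addcl S.
Proof. by move=> hS; split; [apply: sf0|move=> *; apply: sfD]. Qed.
Lemma sf_mulcl S : is_subfield S -> mulcl S.
Proof. by move=> hS u v; apply: sfM. Qed.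

Lemma spnC A s a x y z : A a -> spn A s y -> z = a * x + y -> spn A (x :: s) z.
Proof. by move=> ha hy ->; constructor. Qed.

Lemma spn0 A s : A 0 -> spn A s 0.
Proof. move=> h0; elim: s => [|x s IH]; first by constructor.
by apply: (spnC (a:=0)) IH _ => //; rewrite mul0r addr0. Qed.

Lemma spnD A s x y : addcl A -> spn A s x -> spn A s y -> spn A s (x + y).
Proof.
move=> [h0 hD] hx; elim: hx y => [|a z s' x' ha hx' IH] y hy.
  by rewrite add0r.
inversion hy; subst.
have -> : a * z + x' + (a0 * z + y0) = (a + a0) * z + (x' + y0) by rewrite mulrDl; ring.
by constructor; [apply: hD | apply: IH].
Qed.

Lemma spnM A s c x : mulcl A -> A c -> spn A s x -> spn A s (c * x).
Proof.
move=> hM hc; elim=> [|a z s' y ha hy IH]; first by rewrite mulr0; constructor.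
by rewrite mulrDr mulrA; constructor => //; apply: hM.
Qed.

Lemma spn_mem A s x : A 0 -> A 1 -> x \in s -> spn A s x.
Proof.
move=> h0 h1; elim: s => // y s IH; rewrite inE => /orP[/eqP->|hx].
  by apply: (spnC (a:=1)) (spn0 _ h0) _ => //; rewrite mul1r addr0.
by apply: (spnC (a:=0)) (IH hx) _ => //; rewrite mul0r add0r.
Qed.

Lemma spn_sub A S s x : is_subfield S -> subset_of A S -> (forall y, y \in s -> S y) ->
  spn A s x -> S x.
Proof.
move=> hS hA hs hx; elim: hx hs => [|a z s' y ha hy IH] hs; first exact: sf0.
apply: sfD => //; last by apply: IH => w hw; apply: hs; rewrite inE hw orbT.
by apply: sfM => //; [apply: hA | apply: hs; rewrite inE eqxx].
Qed.

Lemma spn_mono A A' s x : subset_of A A' -> spn A s x -> spn A' s x.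
Proof. by move=> h; elim=> *; constructor => //; apply: h. Qed.

Lemma spn_cat A s1 s2 x : A 0 ->
  spn A (s1 ++ s2) x <-> exists x1 x2, [/\ spn A s1 x1, spn A s2 x2 & x = x1 + x2].
Proof.
move=> h0; split.
  elim: s1 x => [|z s1 IH] x /=; first by move=> h; exists 0, x; split => //; [constructor|rewrite add0r].
  move=> h; inversion h; subst.
  have [x1 [x2 [h1 h2 ->]]] := IH _ H3.
  by exists (a * z + x1), x2; split => //; [constructor|rewrite addrA].
case=> x1 [x2 [h1 h2 ->]]; elim: h1 => [|a z s y ha hy IH] /=; first by rewrite add0r.
by rewrite -addrA; constructor.
Qed.

Lemma spn_mapM A s m x :
  spn A [seq b * m | b <- s] x <-> exists y, spn A s y /\ x = y * m.
Proof.
split.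
  elim: s x => [|z s IH] x /= h; inversion h; subst; first by exists 0; split; [constructor|rewrite mul0r].
  have [y' [hy' ->]] := IH _ H3.
  by exists (a * z + y'); split; [constructor|rewrite mulrDl mulrA].
case=> y [hy ->]; elim: hy => [|a z s' y' ha hy IH] /=; first by rewrite mul0r; constructor.
by rewrite mulrDl -mulrA; constructor.
Qed.

Definition prod b c : seq K := flatten [seq [seq bi * cj | bi <- b] | cj <- c].

Lemma prod_cons b c0 c : prod b (c0 :: c) = [seq bi * c0 | bi <- b] ++ prod b c.
Proof. by []. Qed.

Lemma prod_spn L M b c y : addcl L -> (forall m, M m -> spn L b m) -> spn M c y -> spn L (prod b c) y.
Proof.
move=> hL hMb; elim=> [|a z s y' ha hy IH]; first by constructor.
rewrite prod_cons; apply/spn_cat; first by case: hL.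
exists (a * z), y'; split => //; apply/spn_mapM; exists a; split => //; exact: hMb.
Qed.

Lemma prod_spn_inv L M b c y : L 0 -> is_subfield M -> subset_of L M -> (forall x, x \in b -> M x) ->
  spn L (prod b c) y -> spn M c y.
Proof.
move=> hL0 hM hLM hb; elim: c y => [|c0 c IH] y /=; first by move=> h; inversion h; constructor.
rewrite prod_cons => /(spn_cat _ _ _ hL0) [y1 [y2 [/spn_mapM [u [hu ->]] /IH h2 ->]]].
by apply: spnC h2 _ => //; apply: (spn_sub hM hLM hb hu).
Qed.

Lemma spn_addcl L s : addcl L -> addcl (spn L s).
Proof. by move=> hL; split; [apply: spn0; case: hL|move=> u v; apply: spnD]. Qed.

Lemma spn_consl L z s x : L 0 -> spn L s x -> spn L (z :: s) x.
Proof. by move=> h0 h; apply: (spnC (a:=0)) h _ => //; rewrite mul0r add0r. Qed.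

Lemma swap_spn L M b c x : addcl L -> mulcl L -> (forall m, M m -> spn L b m) ->
  spn M c x -> spn (spn L c) b x.
Proof.
move=> hL hLm hMb; elim=> [|a z s x' ha hx IH].
  by apply: spn0; apply: spn0; case: hL.
apply: spnD; first exact: spn_addcl.
  have := hMb _ ha; elim=> [|l b0 b' a' hl ha' IHa].
    by rewrite mul0r; apply: spn0; apply: spn0; case: hL.
  rewrite mulrDl -mulrA [b0 * z]mulrC mulrA.
  apply: spnC IHa _ => //.
  by apply: (spnC (a:=l)) (spn0 _ _) _ => //; [case: hL|rewrite addr0].
by apply: spn_mono IH => y; apply: spn_consl; case: hL.
Qed.

Lemma indepR_cons A x s : indepR A (x :: s) <->
  indepR A s /\ (forall a y, A a -> spn A s y -> a * x + y = 0 -> a = 0).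
Proof. by []. Qed.

Lemma spn_cons_inv A x s z : spn A (x :: s) z -> exists a y, [/\ A a, spn A s y & z = a * x + y].
Proof. by move=> h; inversion h; subst; exists a, y. Qed.

Lemma indepR_zero A s x : A 0 -> indepR A s -> spn A s x -> x = 0 -> True.
Proof. by []. Qed.

Lemma indepR_cat A s1 s2 : A 0 -> indepR A s1 -> indepR A s2 ->
  (forall x1 x2, spn A s1 x1 -> spn A s2 x2 -> x1 + x2 = 0 -> x1 = 0) ->
  indepR A (s1 ++ s2).
Proof.
move=> h0; elim: s1 => [|z s1 IH] //= [hi1 hz] hi2 hdis; split.
  apply: IH => // x1 x2 h1 h2 e.
  have := hdis x1 x2 (spnC h0 h1 (esym (etrans (congr1 (fun t => t + x1) (mul0r z)) (add0r x1)))) h2.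
  by move=> ->.
move=> a y ha /(spn_cat _ _ _ h0) [y1 [y2 [h1 h2 ->]]] e.
have e1 : a * z + y1 = 0.
  by apply: (hdis _ y2) => //; [constructor|rewrite -addrA].
exact: hz e1.
Qed.

Lemma indepR_mapM A s m : m != 0 -> indepR A s -> indepR A [seq x * m | x <- s].
Proof.
move=> hm; elim: s => [|z s IH] //= [hi hz]; split; first exact: IH.
move=> a y ha /spn_mapM [y' [hy' ->]] e.
apply: (hz a y') => //; apply/eqP; move: e => /eqP.
by rewrite mulrA -mulrDl mulf_eq0 (negPf hm) orbF.
Qed.

Lemma indepR_head_nz A x s : A 0 -> A 1 -> indepR A (x :: s) -> x != 0.
Proof.
move=> h0 h1 [_ hx]; apply/eqP => ex.
have := hx 1 0 h1 (spn0 _ h0); rewrite ex mulr0 addr0 => /(_ erefl) /eqP.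
by rewrite oner_eq0.
Qed.

Lemma prod_indep L M b c : is_subfield L -> is_subfield M -> subset_of L M ->
  (forall x, x \in b -> M x) -> indepR L b -> indepR M c -> indepR L (prod b c).
Proof.
move=> hL hM hLM hb hib; elim: c => [|c0 c IH] //= hic.
have hc := hic; move: hic => [hic hc0].
rewrite prod_cons; apply: indepR_cat; first exact: sf0.
- apply: indepR_mapM => //; apply: (indepR_head_nz (A:=M)) hc; [exact: sf0|exact: sf1].
- exact: IH.
move=> x1 x2 /spn_mapM [u [hu ->]] h2 e.
have hu' : M u by apply: (spn_sub hM hLM hb hu).
have h2' : spn M c x2 by apply: (prod_spn_inv (sf0 hL) hM hLM hb h2).
by rewrite (hc0 u x2 hu' h2' e) mul0r.
Qed.

Lemma sum_cons (a : K) c x s :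
  \sum_(i < size (x :: s)) (a :: c)`_i * (x :: s)`_i = a * x + \sum_(i < size s) c`_i * s`_i.
Proof. by rewrite big_ord_recl. Qed.

Lemma spn_lin A s x : A 0 -> spn A s x -> lin_comb A s x.
Proof.
move=> h0; elim=> [|a z s' y ha hy [c [hs hc ->]]].
  by exists [::]; split => //; [case|rewrite big_ord0].
exists (a :: c); split; [by rewrite /= hs|by case|by rewrite sum_cons].
Qed.

Lemma lin_spn A s x : lin_comb A s x -> spn A s x.
Proof.
elim: s x => [|z s IH] x [c [hs hc ->]].
  by rewrite big_ord0; constructor.
case: c hs hc => // a c [hs] hc.
rewrite sum_cons; apply: spnC (erefl _); first exact: (hc 0%N).
by apply: IH; exists c; split => // i; apply: (hc i.+1).
Qed.

Lemma indepR_lin A s : A 0 -> indepR A s -> lin_indep A s.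
Proof.
move=> h0; elim: s => [|z s IH]; first by move=> _ c _ _ _ [].
move=> [hi hz] c.
case: c => // a c [hs] hc; rewrite sum_cons => e.
have hsp : spn A s (\sum_(i < size s) c`_i * s`_i).
  by apply: lin_spn; exists c; split => // i; apply: (hc i.+1).
have ha := hz a _ (hc 0%N) hsp e.
move: e; rewrite ha mul0r add0r => e.
case=> [|i] /=; first by [].
by rewrite ltnS; apply: (IH hi) => // j; apply: (hc j.+1).
Qed.

Lemma lin_indepR A s : A 0 -> lin_indep A s -> indepR A s.
Proof.
move=> h0; elim: s => [|z s IH] //= hl; split.
  apply: IH => c hs hc e i hi.
  have hs' : size (0 :: c) = size (z :: s) by rewrite /= hs.
  apply: (hl (0 :: c) hs' _ _ i.+1 hi).
    by case.
  by rewrite sum_cons mul0r add0r.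
move=> a y ha /(spn_lin h0) [c [hs hc ->]] e.
have hs' : size (a :: c) = size (z :: s) by rewrite /= hs.
by apply: (hl (a :: c) hs' _ _ 0%N) => //; [case|rewrite sum_cons].
Qed.
End Basics.

Section Frob.
Variables (K : fieldType) (p : nat).
Hypothesis hp : p \in [pchar K].
Implicit Types (S A L M : K -> Prop) (s : seq K).

Lemma p_prime : prime p. Proof. exact: pcharf_prime hp. Qed.
Lemma p_gt1 : (1 < p)%N. Proof. exact: prime_gt1 p_prime. Qed.
Lemma p_gt0 : (0 < p)%N. Proof. exact: prime_gt0 p_prime. Qed.

Lemma frobD (x y : K) : (x + y) ^+ p = x ^+ p + y ^+ p.
Proof. exact: (pFrobenius_autD_comm hp (mulrC x y)). Qed.
Lemma frobB (x y : K) : (x - y) ^+ p = x ^+ p - y ^+ p.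
Proof. exact: (pFrobenius_autB_comm hp (mulrC x y)). Qed.
Lemma frob_inj (x y : K) : x ^+ p = y ^+ p -> x = y.
Proof.
move=> e; apply/eqP; rewrite -subr_eq0; apply/eqP.
have : (x - y) ^+ p = 0 by rewrite frobB e subrr.
by move/eqP; rewrite expf_eq0 => /andP[_ /eqP].
Qed.
Lemma frob0 : (0 : K) ^+ p = 0.
Proof. by rewrite expr0n; case: p p_gt0. Qed.

Definition FrP A : K -> Prop := fun x => exists a, A a /\ x = a ^+ p.

Lemma FrP_sf S : is_subfield S -> is_subfield (FrP S).
Proof.
move=> hS; split.
- by exists 0; split; [apply: sf0|rewrite frob0].
- by exists 1; split; [apply: sf1|rewrite expr1n].
- by move=> _ _ [a [ha ->]] [b [hb ->]]; exists (a - b); split; [apply: sfB|rewrite frobB].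
- by move=> _ _ [a [ha ->]] [b [hb ->]]; exists (a * b); split; [apply: sfM|rewrite exprMn].
- by move=> _ [a [ha ->]]; exists a^-1; split; [apply: sfV|rewrite exprVn].
Qed.

Lemma FrP_sub S : is_subfield S -> subset_of (FrP S) S.
Proof. by move=> hS _ [a [ha ->]]; apply: sfX. Qed.

Definition frs s := [seq x ^+ p | x <- s].

Lemma spn_Fr A s x : spn A s x -> spn (FrP A) (frs s) (x ^+ p).
Proof.
elim=> [|a z s' y ha hy IH] /=; first by rewrite frob0; constructor.
by rewrite frobD exprMn; constructor => //; exists a.
Qed.

Lemma spn_Fr_inv A s y : A 0 -> spn (FrP A) (frs s) y -> exists x, spn A s x /\ y = x ^+ p.
Proof.
move=> h0; elim: s y => [|z s IH] y /= h; inversion h; subst.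
  by exists 0; split; [constructor|rewrite frob0].
have [x [hx ->]] := IH _ H3.
case: H1 => a' [ha' ->].
by exists (a' * z + x); split; [constructor|rewrite frobD exprMn].
Qed.

Lemma indepR_Fr A s : A 0 -> indepR A s -> indepR (FrP A) (frs s).
Proof.
move=> h0; elim: s => [|z s IH] //= [hi hz]; split; first exact: IH.
move=> _ y [a [ha ->]] /(spn_Fr_inv h0) [x [hx ->]] e.
have e' : (a * z + x) ^+ p = 0 ^+ p by rewrite frob0 frobD exprMn.
by rewrite (hz a x ha hx (frob_inj e')) frob0.
Qed.

Definition pows (x : K) : seq K := mkseq (fun i => x ^+ i) p.
Definition Adj L x : K -> Prop := spn L (pows x).

Lemma pows1 x : 1 \in pows x.
Proof. by apply/mapP; exists 0%N; [rewrite mem_iota add0n p_gt0|rewrite expr0]. Qed.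
Lemma powsx x : x \in pows x.
Proof. by apply/mapP; exists 1%N; [rewrite mem_iota add0n p_gt1|rewrite expr1]. Qed.
Lemma pows_mem x m : m \in pows x -> exists2 i, (i < p)%N & m = x ^+ i.
Proof. by case/mapP => i; rewrite mem_iota add0n => hi ->; exists i. Qed.

Lemma spn_mul_closed L s t w y : addcl L -> mulcl L ->
  (forall m, m \in s -> spn L t (w * m)) -> spn L s y -> spn L t (w * y).
Proof.
move=> hL hLm hw h; elim: h hw => [|a z s' y' ha hy IH] hw.
  by rewrite mulr0; apply: spn0; case: hL.
rewrite mulrDr; apply: spnD => //.
  by rewrite mulrCA; apply: spnM => //; apply: hw; rewrite inE eqxx.
by apply: IH => m hm; apply: hw; rewrite inE hm orbT.
Qed.

Section AdjSec.
Variables (L : K -> Prop) (x : K).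
Hypotheses (hL : is_subfield L) (hxp : L (x ^+ p)).

Lemma Adj_L a : L a -> Adj L x a.
Proof.
move=> ha; rewrite -[a]mulr1; apply: spnM; first exact: sf_mulcl.
  exact: ha.
by apply: spn_mem (pows1 x); [apply: sf0|apply: sf1].
Qed.

Lemma Adj_x : Adj L x x.
Proof. by apply: spn_mem (powsx x); [apply: sf0|apply: sf1]. Qed.

Lemma Adj_mem m : m \in pows x -> Adj L x m.
Proof. by apply: spn_mem; [apply: sf0|apply: sf1]. Qed.

Lemma Adj_mulx y : Adj L x y -> Adj L x (x * y).
Proof.
apply: spn_mul_closed; [exact: sf_addcl|exact: sf_mulcl|].
move=> m /pows_mem [i hi ->]; rewrite -exprS.
case: (ltnP i.+1 p) => hi1.
  by apply: Adj_mem; apply/mapP; exists i.+1; rewrite ?mem_iota.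
have -> : i.+1 = p by apply/eqP; rewrite eqn_leq hi1 hi.
exact: Adj_L.
Qed.

Lemma Adj_mulX i y : Adj L x y -> Adj L x (x ^+ i * y).
Proof. by move=> hy; elim: i => [|i IH]; rewrite ?expr0 ?mul1r // exprS -mulrA; apply: Adj_mulx. Qed.

Lemma Adj_mul y z : Adj L x y -> Adj L x z -> Adj L x (y * z).
Proof.
move=> hy hz; rewrite mulrC; apply: (spn_mul_closed (s := pows x)) hy; [exact: sf_addcl|exact: sf_mulcl|].
by move=> m /pows_mem [i _ ->]; rewrite mulrC; apply: Adj_mulX.
Qed.

Lemma Adj_frob y : Adj L x y -> L (y ^+ p).
Proof.
have : forall m, m \in pows x -> L (m ^+ p).
  by move=> m /pows_mem [i _ ->]; rewrite exprAC; apply: sfX.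
move=> hs h; elim: h hs => [|a z s y' ha hy IH] hs; first by rewrite frob0; apply: sf0.
rewrite frobD exprMn; apply: sfD => //.
  by apply: sfM => //; [apply: sfX|apply: hs; rewrite inE eqxx].
by apply: IH => m hm; apply: hs; rewrite inE hm orbT.
Qed.

Lemma Adj_X y i : Adj L x y -> Adj L x (y ^+ i).
Proof.
move=> hy; elim: i => [|i IH]; first by rewrite expr0; apply: Adj_L; apply: sf1.
by rewrite exprS; apply: Adj_mul.
Qed.

Lemma Adj_sf : is_subfield (Adj L x).
Proof.
split.
- by apply: spn0; apply: sf0.
- by apply: Adj_L; apply: sf1.
- move=> y z hy hz; apply: spnD; first exact: sf_addcl.
    exact: hy.
  rewrite -mulN1r; apply: spnM => //; first exact: sf_mulcl.
  by apply: sfN => //; apply: sf1.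
- exact: Adj_mul.
- move=> y hy.
  have -> : y^-1 = y ^+ p.-1 * (y ^+ p)^-1.
    have [->|y0] := eqVneq y 0; first by rewrite frob0 !invr0 mulr0.
    rewrite -(prednK p_gt0) exprS /= invfM mulrCA mulfV ?mulr1 //.
    by rewrite expf_neq0.
  by apply: Adj_mul; [apply: Adj_X|apply: Adj_L; apply: sfV => //; apply: Adj_frob].
Qed.

Lemma Adj_min S : is_subfield S -> subset_of L S -> S x -> subset_of (Adj L x) S.
Proof.
move=> hS hLS hx y; apply: spn_sub => //.
by move=> m /pows_mem [i _ ->]; apply: sfX.
Qed.

End AdjSec.
End Frob.

Section SubF.
Variables (K : fieldType) (L : K -> Prop).
Hypothesis hL : is_subfield L.

Definition Lb (y : K) : bool := let _ := hL in if excluded_middle_informative (L y) then true else false.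
Lemma LbP y : Lb y = true <-> L y.
Proof. by rewrite /Lb; case: excluded_middle_informative. Qed.

Lemma Lb_divring : GRing.divring_closed Lb.
Proof.
split.
- by apply/LbP; apply: sf1.
- by move=> u v /LbP hu /LbP hv; apply/LbP; apply: sfB.
- by move=> u v /LbP hu /LbP hv; apply/LbP; apply: sfM => //; apply: sfV.
Qed.

HB.instance Definition _ := GRing.isDivringClosed.Build K Lb Lb_divring.

Record LT := MkLT { lval :> K; lvalP : Lb lval }.
HB.instance Definition _ := [isSub for lval].
HB.instance Definition _ := [Choice of LT by <:].
HB.instance Definition _ := [SubChoice_isSubIntegralDomain of LT by <:].
HB.instance Definition _ := [SubIntegralDomain_isSubField of LT by <:].

Lemma lval_is_zmod_morphism : zmod_morphism lval. Proof. by []. Qed.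
Lemma lval_is_monoid_morphism : monoid_morphism lval. Proof. by []. Qed.
HB.instance Definition _ := GRing.isZmodMorphism.Build LT K lval lval_is_zmod_morphism.
HB.instance Definition _ := GRing.isMonoidMorphism.Build LT K lval lval_is_monoid_morphism.

Lemma lval_in (u : LT) : L (lval u).
Proof. by apply/LbP; apply: lvalP. Qed.

Definition lift (y : K) : LT := insubd (1 : LT) y.
Lemma liftK y : L y -> lval (lift y) = y.
Proof. by move=> hy; rewrite /lift val_insubd; move/LbP: hy => ->. Qed.

End SubF.

Lemma prod_nseq_XsubC (K : fieldType) (x : K) k :
  \prod_(z <- nseq k x) ('X - z%:P) = ('X - x%:P) ^+ k.
Proof. by elim: k => [|k IH]; rewrite ?big_nil ?expr0 // /= big_cons IH exprS. Qed.
Lemma sum_nseq (K : fieldType) (x : K) k : \sum_(z <- nseq k x) z = x *+ k.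
Proof. by elim: k => [|k IH]; rewrite ?big_nil ?mulr0n // /= big_cons IH mulrS. Qed.

Section AdjIndep.
Variables (K : fieldType) (p : nat).
Hypothesis hp : p \in [pchar K].
Variables (L : K -> Prop) (x : K).
Hypotheses (hL : is_subfield L) (hxp : L (x ^+ p)) (hx : ~ L x).

Local Notation LT := (LT hL).

Lemma Adj_lin_indep : lin_indep L (pows p x).
Proof.
move=> c hs hc e.
have sp : size (pows p x) = p by rewrite size_mkseq.
pose f : {poly LT} := \poly_(i < p) lift hL c`_i.
suff f0 : f = 0.
  move=> i hi; have := congr1 (fun q : {poly LT} => lval (q`_i)) f0.
  by rewrite coef_poly -sp hi liftK // coef0 /=.
apply/eqP; apply: contraT => fn0.
pose mf := map_poly (@lval _ _ hL) f.
have mfE : mf = \poly_(i < p) c`_i.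
  apply/polyP => i; rewrite coef_map !coef_poly.
  by case: ifP => // _; apply: liftK.
have rootf : root mf x.
  rewrite mfE /root horner_poly; apply/eqP; move: e; rewrite sp => e; rewrite -[RHS]e.
  by apply: eq_bigr => i _; rewrite nth_mkseq.
pose g : {poly LT} := 'X^p - (lift hL (x ^+ p))%:P.
have hpP : p \in [pchar {poly K}] by rewrite pchar_poly.
have mgE : map_poly (@lval _ _ hL) g = ('X - x%:P) ^+ p.
  rewrite rmorphB /= map_polyXn map_polyC /= liftK //.
  have := pFrobenius_autB_comm hpP (commr_sym (commr_polyX x%:P)).
  by rewrite !pFrobenius_autE => ->; rewrite polyC_exp.
pose h := gcdp f g.
have mhE : map_poly (@lval _ _ hL) h = gcdp mf (('X - x%:P) ^+ p) by rewrite gcdp_map mgE.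
have dXh : ('X - x%:P) %| map_poly (@lval _ _ hL) h.
  rewrite mhE dvdp_gcd dvdp_XsubCl rootf /=.
  apply/dvdp_exp_XsubCP; exists 1%N; [exact: (p_gt0 hp)|by rewrite expr1 eqpxx].
have : map_poly (@lval _ _ hL) h %| ('X - x%:P) ^+ p by rewrite mhE dvdp_gcdr.
case/dvdp_exp_XsubCP => k hk hhk.
have mf0 : mf != 0 by rewrite map_poly_eq0.
have szmf : (size mf <= p)%N by rewrite mfE; apply: size_poly.
have hdvf : map_poly (@lval _ _ hL) h %| mf by rewrite mhE dvdp_gcdl.
have szh := dvdp_leq mf0 hdvf.
rewrite (eqp_size hhk) size_exp_XsubC in szh.
have kp : (k < p)%N by apply: leq_trans szh szmf.
have k0 : (0 < k)%N.
  case: k {hk szh kp} hhk => // /eqp_dvdr hh.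
  move: dXh; rewrite hh expr0 dvdp1 size_XsubC //.
have h0 : h != 0.
  apply: contraTneq hhk => ->; rewrite rmorph0 eqp_sym eqp0 expf_neq0 //.
  by rewrite polyXsubC_eq0.
pose h1 := (lead_coef h)^-1 *: h.
have h1m : h1 \is monic by rewrite monicE lead_coefZ mulVf // lead_coef_eq0.
have mh1 : map_poly (@lval _ _ hL) h1 = ('X - x%:P) ^+ k.
  apply/eqP; rewrite -eqp_monic ?map_monic ?monic_exp ?monicXsubC //.
  apply: eqp_trans hhk; rewrite map_polyZ eqp_scale //.
  by rewrite fmorph_eq0 invr_eq0 lead_coef_eq0.
have := @coefPn_prod_XsubC _ (nseq k x).
rewrite size_nseq prod_nseq_XsubC sum_nseq -mh1 coef_map -lt0n => /(_ k0) e1.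
have Lk : L (x *+ k).
  rewrite -[x *+ k]opprK; apply: sfN => //; rewrite -e1; exact: lval_in.
exfalso; apply: hx.
have kn0 : (k%:R : K) != 0.
  by rewrite -(dvdn_pcharf hp) gtnNdvd.
have -> : x = (x *+ k) * (k%:R)^-1 by rewrite -[x *+ k]mulr_natr mulfK.
by apply: sfM => //; apply: sfV => //; apply: sfn.
Qed.

Lemma Adj_indep : indepR L (pows p x).
Proof. by apply: lin_indepR; [apply: sf0|apply: Adj_lin_indep]. Qed.
End AdjIndep.

Section Tower.
Variables (K : fieldType) (p : nat).
Hypothesis hp : p \in [pchar K].
Implicit Types (S A L M : K -> Prop) (s t : seq K).

Fixpoint Tow L t : K -> Prop := match t with [::] => L | x :: t' => Tow (Adj p L x) t' end.
Fixpoint okT L t : Prop := match t with [::] => True | x :: t' => L (x ^+ p) /\ okT (Adj p L x) t' end.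
Fixpoint goodT L t : Prop :=
  match t with [::] => True | x :: t' => [/\ L (x ^+ p), ~ L x & goodT (Adj p L x) t'] end.
Fixpoint mono t : seq K := match t with [::] => [:: 1] | x :: t' => prod (pows p x) (mono t') end.

Lemma goodT_okT t L : goodT L t -> okT L t.
Proof. by elim: t L => //= x t IH L [h1 _ h2]; split => //; apply: IH. Qed.

Lemma okT_of t L : is_subfield L -> (forall y, y \in t -> L (y ^+ p)) -> okT L t.
Proof.
elim: t L => //= x t IH L hL ht; split; first by apply: ht; rewrite inE eqxx.
have hx : L (x ^+ p) by apply: ht; rewrite inE eqxx.
apply: IH; first exact: Adj_sf.
by move=> y hy; apply: Adj_L => //; apply: ht; rewrite inE hy orbT.
Qed.

Lemma spn_one L y : is_subfield L -> spn L [:: 1] y <-> L y.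
Proof.
move=> hL; split.
  by move=> /spn_cons_inv [a [y' [ha hy' ->]]]; inversion hy'; rewrite mulr1 addr0.
by move=> hy; apply: (spnC (a:=y)) (spn_nil _) _ => //; rewrite mulr1 addr0.
Qed.

Lemma Tow_prop t L : is_subfield L -> okT L t ->
  [/\ is_subfield (Tow L t), subset_of L (Tow L t), (forall y, y \in t -> Tow L t y),
      (forall S, is_subfield S -> subset_of L S -> (forall y, y \in t -> S y) -> subset_of (Tow L t) S)
    & (forall y, Tow L t y <-> spn L (mono t) y)].
Proof.
elim: t L => [|x t IH] L hL /=.
  by move=> _; split => // y; rewrite spn_one.
move=> [hx hok].
have hA := Adj_sf hp hL hx.
have [h1 h2 h3 h4 h5] := IH _ hA hok.
split => //.
- by move=> y hy; apply: h2; apply: Adj_L.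
- move=> y; rewrite inE => /orP[/eqP->|hy]; last exact: h3.
  by apply: h2; apply: Adj_x.
- move=> S hS hLS hy; apply: h4 => //.
    by apply: Adj_min => //; apply: hy; rewrite inE eqxx.
  by move=> y hy'; apply: hy; rewrite inE hy' orbT.
- move=> y; rewrite h5; split.
    apply: prod_spn; first exact: (sf_addcl hL).
    by move=> m hm.
  apply: prod_spn_inv => //; first exact: sf0.
    by move=> a; apply: Adj_L.
  exact: Adj_mem.
Qed.

Lemma mono_indep t L : is_subfield L -> goodT L t -> indepR L (mono t).
Proof.
elim: t L => [|x t IH] L hL /=.
  move=> _; split => // a y ha hy; inversion hy; subst.
  by rewrite mulr1 addr0.
move=> [hx hnx hg].
have hA := Adj_sf hp hL hx.
apply: (prod_indep (M := Adj p L x)) => //.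
- by move=> a; apply: Adj_L.
- by move=> m hm; apply: Adj_mem.
- exact: Adj_indep.
- exact: IH.
Qed.

Lemma mono_head t : exists Z, mono t = 1 :: Z.
Proof.
elim: t => [|x t [Z IH]] /=; first by exists [::].
rewrite IH prod_cons /pows /mkseq -(prednK (p_gt0 hp)) /=.
by eexists; rewrite expr0 mulr1.
Qed.

Lemma greedy s L : is_subfield L -> (forall y, L (y ^+ p)) ->
  exists t, [/\ goodT L t, (forall y, y \in s -> Tow L t y) & (forall y, y \in t -> y \in s)].
Proof.
elim: s L => [|z s IH] L hL hpow; first by exists [::].
case: (classic (L z)) => hz.
  have [t [hg hs ht]] := IH L hL hpow.
  exists t; split => //.
    move=> y; rewrite inE => /orP[/eqP->|hy]; last exact: hs.
    by have [_ h2 _ _ _] := Tow_prop hL (goodT_okT hg); apply: h2.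
  by move=> y hy; rewrite inE ht ?orbT.
have hA := Adj_sf hp hL (hpow z).
have [t [hg hs ht]] := IH _ hA (fun y => Adj_L hp z hL (hpow y)).
exists (z :: t); split => //.
  move=> y; rewrite inE => /orP[/eqP->|hy]; last exact: hs.
  have [_ h2 _ _ _] := Tow_prop hA (goodT_okT hg); apply: h2.
  exact: Adj_x.
by move=> y; rewrite !inE => /orP[->//|/ht ->]; rewrite orbT.
Qed.

End Tower.

Section Lin.
Variables (K : fieldType).
Implicit Types (S A L M : K -> Prop) (s t : seq K).

Lemma fam_choice (T : Type) (d : T) (P : nat -> T -> Prop) n :
  (forall i, (i < n)%N -> exists c, P i c) -> exists f : nat -> T, forall i, (i < n)%N -> P i (f i).
Proof.
elim: n => [|n IH] h; first by exists (fun _ => d).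
have [f hf] := IH (fun i hi => h i (ltnW hi)).
have [c hc] := h n (ltnSn n).
exists (fun i => if i == n then c else f i) => i; rewrite ltnS leq_eqVlt.
by case: eqP => [->|_] //= /hf.
Qed.

Lemma sum_delta n (i : nat) (F : nat -> K) : (i < n)%N ->
  \sum_(k < n) (((k : nat) == i)%:R * F k) = F i.
Proof.
move=> hi; rewrite (bigD1 (Ordinal hi)) //= eqxx mul1r big1 ?addr0 // => k hk.
suff /negPf -> : (k : nat) != i by rewrite mul0r.
by apply: contra hk => /eqP e; apply/eqP; apply: val_inj.
Qed.

Lemma lin_coef A s x : lin_comb A s x ->
  exists f : nat -> K, (forall j, A (f j)) /\ x = \sum_(j < size s) f j * s`_j.
Proof. by case=> c [_ hc ->]; exists (fun j => c`_j). Qed.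

Lemma lin_indep_f A s (f : nat -> K) : A 0 -> lin_indep A s -> (forall j, (j < size s)%N -> A (f j)) ->
  \sum_(j < size s) f j * s`_j = 0 -> forall j, (j < size s)%N -> f j = 0.
Proof.
move=> h0 hi hf e j hj.
have := hi (mkseq f (size s)) (size_mkseq _ _) _ _ j hj; rewrite nth_mkseq //; apply.
  move=> i; case: (ltnP i (size s)) => hi'; first by rewrite nth_mkseq //; apply: hf.
  by rewrite nth_default // size_mkseq.
by rewrite -[RHS]e; apply: eq_bigr => i _; rewrite nth_mkseq.
Qed.

Lemma lin_comb_f A s (f : nat -> K) : A 0 -> (forall j, (j < size s)%N -> A (f j)) ->
  lin_comb A s (\sum_(j < size s) f j * s`_j).
Proof.
move=> h0 hf; exists (mkseq f (size s)); split; first exact: size_mkseq.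
  move=> i; case: (ltnP i (size s)) => hi'; first by rewrite nth_mkseq //; apply: hf.
  by rewrite nth_default // size_mkseq.
by apply: eq_bigr => i _; rewrite nth_mkseq.
Qed.

Lemma double_indep L M b c (e : nat -> nat -> K) : is_subfield L -> is_subfield M ->
  (forall x, x \in b -> M x) -> lin_indep L b -> lin_indep M c ->
  (forall i j, L (e i j)) -> subset_of L M ->
  \sum_(i < size b) (\sum_(j < size c) e i j * c`_j) * b`_i = 0 ->
  forall i j, (i < size b)%N -> (j < size c)%N -> e i j = 0.
Proof.
move=> hL hM hb hib hic he hLM E i j hi hj.
have E2 : \sum_(j < size c) (\sum_(i < size b) e i j * b`_i) * c`_j = 0.
  rewrite -[RHS]E; under eq_bigr do rewrite mulr_suml.
  rewrite exchange_big /=; apply: eq_bigr => i' _; rewrite mulr_suml.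
  by apply: eq_bigr => j' _; rewrite -!mulrA [c`_ _ * _]mulrC.
have Z := lin_indep_f (f := fun j => \sum_(i < size b) e i j * b`_i) (sf0 hM) hic _ E2.
have Zj : \sum_(i < size b) e i j * b`_i = 0.
  apply: Z => // j' _; apply: sfsum => // i' _; apply: sfM => //; first exact: hLM.
  case: (ltnP i' (size b)) => h; first by apply: hb; apply: mem_nth.
  by rewrite nth_default //; apply: sf0.
exact: (lin_indep_f (f := fun i => e i j) (sf0 hL) hib (fun i _ => he i j) Zj).
Qed.

Lemma basis_size A B s t : is_subfield A -> is_basis A B s -> is_basis A B t -> (size t <= size s)%N.
Proof.
move=> hA [hsB hsi hsc] [htB hti htc].
have [Mf hM] := fam_choice (fun _ => 0) (P := fun i (f : nat -> K) => (forall j, A (f j)) /\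
   t`_i = \sum_(j < size s) f j * s`_j) (n := size t)
   (fun i hi => lin_coef (hsc _ (htB _ (mem_nth 0 hi)))).
have [Nf hN] := fam_choice (fun _ => 0) (P := fun j (f : nat -> K) => (forall k, A (f k)) /\
   s`_j = \sum_(k < size t) f k * t`_k) (n := size s)
   (fun j hj => lin_coef (htc _ (hsB _ (mem_nth 0 hj)))).
pose Mx : 'M[K]_(size t, size s) := \matrix_(i, j) Mf i j.
pose Nx : 'M[K]_(size s, size t) := \matrix_(j, k) Nf j k.
apply: (@mulmx1_min _ _ _ Mx Nx).
apply/matrixP => i k; rewrite !mxE.
have [hMi eMi] := hM i (ltn_ord i).
pose g := fun k' : nat => \sum_(j < size s) Mf i j * Nf j k' - ((k' == i)%:R).
have hg : forall k', (k' < size t)%N -> A (g k').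
  move=> k' _; apply: sfB => //; last exact: sfn.
  apply: sfsum => // j _; apply: sfM => //.
  by case: (hN j (ltn_ord j)).
have eg : \sum_(k' < size t) g k' * t`_k' = 0.
  rewrite /g; under eq_bigr do rewrite mulrBl.
  rewrite sumrB sum_delta // eMi; apply/eqP; rewrite subr_eq0; apply/eqP.
  under eq_bigr do rewrite mulr_suml.
  rewrite exchange_big /=; apply: eq_bigr => j _.
  have [_ ->] := hN j (ltn_ord j).
  rewrite mulr_sumr; apply: eq_bigr => k' _; by rewrite mulrA.
have := lin_indep_f (sf0 hA) hti hg eg (ltn_ord k).
rewrite /g => /eqP; rewrite subr_eq0 => /eqP E'.
have -> : ((i == k) = ((k : nat) == i)) by rewrite eq_sym.
rewrite -E'; apply: eq_bigr => j _; by rewrite !mxE.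
Qed.

End Lin.

Lemma ext_deg_iff (K : fieldType) (A B : K -> Prop) s n : is_subfield A -> is_basis A B s ->
  (ext_deg A B n <-> n = size s).
Proof.
move=> hA hb; split.
  by case=> t [<- ht]; apply/eqP; rewrite eqn_leq (basis_size hA hb ht) (basis_size hA ht hb).
by move=> ->; exists s.
Qed.

Lemma pow_sf (K : fieldType) p : p \in [pchar K] -> is_subfield (pow_image (K:=K) p).
Proof.
move=> hp; split.
- by exists 0; rewrite frob0.
- by exists 1; rewrite expr1n.
- by move=> _ _ [a ->] [b ->]; exists (a - b); rewrite frobB.
- by move=> _ _ [a ->] [b ->]; exists (a * b); rewrite exprMn.
- by move=> _ [a ->]; exists a^-1; rewrite exprVn.
Qed.

Unset Implicit Arguments.
Theorem mainTheorem12 (K : fieldType) (p : nat) (W1 : K -> Prop) :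
  p \in [pchar K] ->
  fin_gen_over (perfect_core (K:=K) p) ->
  is_subfield W1 ->
  subset_of (pow_image (K:=K) p) W1 ->
  (exists x : K, ~ W1 x) ->
  exists W2 : K -> Prop,
    [/\ is_subfield W2,
        subset_of W2 W1,
        subset_of (pow_image (K:=K) (p ^ 2)) W2,
        (forall x, compositum W2 (pow_image (K:=K) p) x <-> W1 x) &
        same_deg W2 W1 W1 (fun _ => True)].
Proof.
move=> hp [s hs] hW1 hPW1 _.
set P := pow_image p.
have hP : is_subfield P := pow_sf hp.
have hpowP : forall y : K, P (y ^+ p) by move=> y; exists y.
have hpowW : forall y : K, W1 (y ^+ p) by move=> y; apply: hPW1; exists y.
have hcore : forall S : K -> Prop, subset_of P S -> forall y, perfect_core p y -> S y.
  by move=> S hS y hy; apply: hS; move: (hy 1%N); rewrite expn1.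
have [z [hgz hsz _]] := greedy hp s hW1 hpowW.
have [sfT W1T _ _ spnT] := Tow_prop hp hW1 (goodT_okT hgz).
have hK : forall x, Tow p W1 z x.
  move=> x; apply: hs => //; move=> y [hy|hy]; last exact: hsz.
  by apply: W1T; apply: (hcore W1).
set Z := mono p z.
have hZspan : forall x, spn W1 Z x by move=> x; rewrite -spnT.
have hZind : indepR W1 Z := mono_indep hp hW1 hgz.
have okPs : okT p P s by apply: okT_of => // y _; apply: hpowP.
have [sfTs PTs sTs _ spnTs] := Tow_prop hp hP okPs.
have hKP : forall x, spn P (mono p s) x.
  move=> x; rewrite -spnTs; apply: hs => //; move=> y [hy|hy]; last exact: sTs.
  by apply: (hcore _ PTs).
have [Z' hZ'] := mono_head hp z.
have hW0 : W1 0 := sf0 hW1.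
pose Proj x w := W1 w /\ exists y, spn W1 Z' y /\ x = w + y.
have Pex : forall x, exists w, Proj x w.
  move=> x; have := hZspan x; rewrite /Z hZ' => /spn_cons_inv [a [y [ha hy ->]]].
  by exists a; split => //; exists y; split => //; rewrite mulr1.
have Puniq : forall x w w', Proj x w -> Proj x w' -> w = w'.
  move=> x w w' [hw [y [hy ex]]] [hw' [y' [hy' ex']]].
  have hind := hZind; rewrite /Z hZ' in hind; case: hind => _ hh.
  apply/eqP; rewrite -subr_eq0; apply/eqP; apply: (hh _ (y - y')).
  - exact: sfB.
  - apply: spnD; first exact: sf_addcl.
      exact: hy.
    rewrite -mulN1r; apply: spnM => //; first exact: sf_mulcl.
    by apply: sfN => //; apply: sf1.
  - by move: ex'; rewrite ex => /eqP; rewrite mulr1 -subr_eq0 => /eqP <-; ring.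
have Pself : forall x, W1 x -> Proj x x.
  by move=> x hx; split => //; exists 0; split; [apply: spn0|rewrite addr0].
have hPW : subset_of P W1 := hPW1.
have [g [hgW hgP]] : exists g : seq K, (forall w, w \in g -> W1 w) /\
    forall x, spn P (mono p s) x -> exists w, Proj x w /\ spn P g w.
  elim: (mono p s) => [|m l [g' [hg'W hg'P]]].
    exists [::]; split => // x hx; inversion hx; subst.
    by exists 0; split; [apply: Pself|constructor].
  have [wm [hwm [ym [hym em]]]] := Pex m.
  exists (wm :: g'); split.
    by move=> w; rewrite inE => /orP[/eqP->|/hg'W].
  move=> x /spn_cons_inv [a [x' [ha hx' ->]]].
  have [w' [[hw' [y' [hy' ex']]] hw'g]] := hg'P _ hx'.
  exists (a * wm + w'); split; last by constructor.
  split; first by apply: sfD => //; apply: sfM => //; apply: hPW.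
  exists (a * ym + y'); split.
    apply: spnD; first exact: sf_addcl.
      by apply: spnM => //; [exact: sf_mulcl|apply: hPW].
    exact: hy'.
  by rewrite em ex'; ring.
have W1g : forall x, W1 x -> spn P g x.
  move=> x hx; have [w [hw hwg]] := hgP x (hKP x).
  by rewrite (Puniq _ _ _ (Pself _ hx) hw).
have [y [hgy hgT hyg]] := greedy hp g hP hpowP.
have [sfTy PTy yTy minTy spnTy] := Tow_prop hp hP (goodT_okT hgy).
have yW1 : forall u, u \in y -> W1 u by move=> u /hyg; apply: hgW.
have W1Ty : forall x, W1 x -> Tow p P y x.
  by move=> x /W1g; apply: spn_sub => // u /hgT.
have TyW1 : subset_of (Tow p P y) W1 by apply: minTy.
set Y := mono p y.
have hYind : indepR P Y := mono_indep hp hP hgy.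
set F := FrP p W1.
have sfF : is_subfield F := FrP_sf hp hW1.
have FP : subset_of F P by move=> _ [a [_ ->]]; exists a.
have okF : okT p F y.
  by apply: okT_of => // u hu; exists u; split => //; apply: yW1.
have [sfW2 FW2 yW2 minW2 spnW2] := Tow_prop hp sfF okF.
set W2 := Tow p F y.
have W2W1 : subset_of W2 W1.
  by apply: minW2 => // x hx; apply: hPW; apply: FP.
exists W2; split => //.
- move=> x [u ->]; apply: FW2; exists (u ^+ p); split; first exact: hpowW.
  by rewrite -exprM (_ : (p ^ 2 = p * p)%N) // expnS expn1.
- move=> x; split.
    apply: gen_field_min => // u [hu|hu]; [exact: W2W1|exact: hPW].
  move=> /W1Ty; apply: minTy.
  + exact: gen_field_sf.
  + by move=> u hu; apply: gen_field_in; right.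
  + by move=> u hu; apply: gen_field_in; left; apply: yW2.
set B := frs p Z.
have bas1 : is_basis W1 (fun _ => True) Z.
  split => //; first exact: (indepR_lin hW0 hZind).
  by move=> x _; apply: spn_lin.
have BP : forall u, u \in B -> P u by move=> u /mapP [v _ ->]; exists v.
have hBind : lin_indep F B by apply: indepR_lin; [apply: sf0|apply: indepR_Fr].
have hYind' : lin_indep P Y by apply: indepR_lin => //; apply: sf0.
have bas2 : is_basis W2 W1 B.
  split.
  - by move=> u /BP; apply: hPW.
  - move=> c hszc hc e.
    have [l hl] := fam_choice (fun _ => 0) (P := fun i (f : nat -> K) => (forall j, F (f j)) /\
       c`_i = \sum_(j < size Y) f j * Y`_j) (n := size B)
       (fun i _ => lin_coef (spn_lin (sf0 sfF) (proj1 (spnW2 _) (hc i)))).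
    pose ee i j := if (i < size B)%N then l i j else 0.
    have hee : forall i j, F (ee i j).
      by move=> i j; rewrite /ee; case: ifP => h; [case: (hl i h)|apply: sf0].
    have E : \sum_(i < size B) (\sum_(j < size Y) ee i j * Y`_j) * B`_i = 0.
      rewrite -[RHS]e; apply: eq_bigr => i _; rewrite /ee ltn_ord.
      by case: (hl i (ltn_ord i)) => _ ->.
    have Z0 := double_indep sfF hP BP hBind hYind' hee FP E.
    move=> i hi; case: (hl i hi) => _ ->; apply: big1 => j _.
    by have := Z0 i j hi (ltn_ord j); rewrite /ee hi => ->; rewrite mul0r.
  - move=> x /W1Ty; rewrite spnTy => hx.
    apply: spn_lin; first exact: sf0.
    apply: (spn_mono (A := spn F Y)); first by move=> u hu; apply/spnW2.
    apply: (swap_spn (M := P)) hx.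
    + exact: sf_addcl.
    + exact: sf_mulcl.
    + by move=> _ [u ->]; apply: spn_Fr.
move=> n; rewrite (ext_deg_iff _ _ bas2) // (ext_deg_iff _ _ bas1) //.
by rewrite size_map.
Qed.
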